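(* Let $\sigma\subseteq \overline{M}_{\mathbb R}$ be a reflexive Gorenstein cone of index $r$, and let $\overline N^{(r)}:=\overline N+\frac1r\mathbb Z\, n_\sigma\subseteq \overline N_{\mathbb R}$. Let $\rho$ be a facet of the dual cone $\sigma^\vee$ and let $\mathrm{lin}(\rho)$ be its linear span. Then \[\mathrm{lin}(\rho)\cap \overline N=\mathrm{lin}(\rho)\cap \overline N^{(r)}.\] In particular $\partial\sigma^\vee\cap\overline N=\partial\sigma^\vee\cap \overline N^{(r)}$.
   Context: $\overline M\cong\mathbb Z^{\bar d}$ and $\overline N=\mathrm{Hom}(\overline M,\mathbb Z)$ are dual lattices with pairing $\langle\cdot,\cdot\rangle$, $\overline M_{\mathbb R}=\overline M\otimes\mathbb R$, $\overline N_{\mathbb R}=\overline N\otimes\mathbb R$. For a full-dimensional rational polyhedral cone $\sigma\subseteq\overline M_{\mathbb R}$, its dual cone is $\sigma^\vee=\{y\in\overline N_{\mathbb R}:\langle x,y\rangle\ge0\ \forall x\in\sigma\}$. Such a cone $\sigma$ is a Gorenstein cone if it is generated by finitely many lattice points all lying in an affine hyperplane $\{x:\langle x,n\rangle=1\}$ for some $n\in\overline N$; this $n$ is unique and is denoted $n_\sigma$. The support of $\sigma$ is $\sigma\cap\{x:\langle x,n_\sigma\rangle=1\}$, a lattice polytope with respect to the affine lattice $\overline M\cap\{\langle x,n_\sigma\rangle=1\}$. $\sigma$ is a reflexive Gorenstein cone if $\sigma^\vee$ is also a Gorenstein cone; then $m_{\sigma^\vee}\in\overline M$ denotes the point with $\langle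 m_{\sigma^\vee},y\rangle=1$ for all lattice generators $y$ of $\sigma^\vee$, and the index of $\sigma$ is $r=\langle m_{\sigma^\vee},n_\sigma\rangle$. *)

(* Defs.v *)
From HB Require Import structures.
From mathcomp Require Import all_boot all_order all_algebra.
Set Implicit Arguments. Unset Strict Implicit. Unset Printing Implicit Defensive.
Import Order.TTheory GRing.Theory Num.Theory.
Local Open Scope ring_scope.

(* M_R and N_R are both modelled as row vectors 'rV[R]_d, with the lattices
   M, N being the integer points, and the standard pairing. *)
Section GorensteinDefs.
Context {R : archiRealFieldType} {d : nat}.

Definition pair (x y : 'rV[R]_d) : R := \sum_(i < d) x 0 i * y 0 i.

Definition lattice (x : 'rV[R]_d) : Prop := forall i, x 0 i \is a Num.int.

Definition in_cone (gens : seq 'rV[R]_d) (x : 'rV[R]_d) : Prop :=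
  exists c : 'I_(size gens) -> R,
    (forall i, 0 <= c i) /\ x = \sum_(i < size gens) c i *: gens`_i.

Definition dual_cone (S : 'rV[R]_d -> Prop) (y : 'rV[R]_d) : Prop :=
  forall x, S x -> 0 <= pair x y.

Definition gorenstein_cone (S : 'rV[R]_d -> Prop) (gens : seq 'rV[R]_d)
    (n : 'rV[R]_d) : Prop :=
  [/\ forall x, S x <-> in_cone gens x,
      forall g, g \in gens -> lattice g /\ pair g n = 1,
      lattice n &
      \dim <<gens>>%VS = d].

Definition lin (S : 'rV[R]_d -> Prop) (y : 'rV[R]_d) : Prop :=
  exists s : seq 'rV[R]_d, (forall x, x \in s -> S x) /\ y \in <<s>>%VS.

Definition is_facet (C rho : 'rV[R]_d -> Prop) : Prop :=
  exists u : 'rV[R]_d,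
    [/\ u != 0,
        forall y, C y -> 0 <= pair u y,
        forall y, rho y <-> (C y /\ pair u y = 0) &
        exists s : seq 'rV[R]_d,
          (forall x, x \in s -> rho x) /\ \dim <<s>>%VS = d.-1].

Definition lattice_r (r : R) (n y : 'rV[R]_d) : Prop :=
  exists k : int, lattice (y - (k%:~R / r) *: n).

Definition boundary (C : 'rV[R]_d -> Prop) (y : 'rV[R]_d) : Prop :=
  C y /\ ~ (exists e : R, 0 < e /\
              forall z : 'rV[R]_d, (forall i, `|z 0 i - y 0 i| < e) -> C z).

End GorensteinDefs.

(* Main.v *)
Require Import Defs.
From HB Require Import structures.
From mathcomp Require Import all_boot all_order all_algebra.
From mathcomp Require Import lra.
Import Order.TTheory GRing.Theory Num.Theory.
Local Open Scope ring_scope.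

Section Helpers.
Variables (R : archiRealFieldType) (d : nat).
Implicit Types (x y z u g : 'rV[R]_d).

Lemma pairC x y : pair x y = pair y x.
Proof. by apply: eq_bigr => i _; rewrite mulrC. Qed.

Lemma pairD x y z : pair x (y + z) = pair x y + pair x z.
Proof. by rewrite /pair -big_split; apply: eq_bigr => i _; rewrite mxE mulrDr. Qed.

Lemma pair0 x : pair x 0 = 0.
Proof. by rewrite /pair big1 // => i _; rewrite mxE mulr0. Qed.

Lemma pairZ x a y : pair x (a *: y) = a * pair x y.
Proof. by rewrite /pair mulr_sumr; apply: eq_bigr => i _; rewrite mxE mulrCA. Qed.

Lemma pairB x y z : pair x (y - z) = pair x y - pair x z.
Proof. by rewrite /pair -sumrB; apply: eq_bigr => i _; rewrite !mxE mulrBr. Qed.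

Lemma pair_sum x (I : Type) (t : seq I) (P : pred I) (F : I -> 'rV[R]_d) :
  pair x (\sum_(i <- t | P i) F i) = \sum_(i <- t | P i) pair x (F i).
Proof. exact: (big_morph (pair x) (pairD x) (pair0 x)). Qed.

Lemma pair_int x y : lattice x -> lattice y -> pair x y \is a Num.int.
Proof. by move=> hx hy; apply: rpred_sum => i _; apply: rpredM. Qed.

Lemma cone_gen (gens : seq 'rV[R]_d) g : g \in gens -> in_cone gens g.
Proof.
move=> hg; pose i0 : 'I_(size gens) := Ordinal (etrans (index_mem g gens) hg).
exists (fun i => (i == i0)%:R); split=> [i|]; first by case: (i == i0).
rewrite (bigD1 i0) //= eqxx scale1r big1 ?addr0 ?nth_index //.
by move=> i /negbTE ->; rewrite scale0r.
Qed.

Lemma dual_of_gens (sigma : 'rV[R]_d -> Prop) gens z :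
  (forall x, sigma x <-> in_cone gens x) ->
  (forall g, g \in gens -> 0 <= pair g z) -> dual_cone sigma z.
Proof.
move=> hs hg x /hs [c [c0 ->]]; rewrite pairC pair_sum.
apply: sumr_ge0 => i _; rewrite pairZ pairC; apply: mulr_ge0 => //.
by apply: hg; apply: mem_nth.
Qed.

Lemma gen_dual (sigma : 'rV[R]_d -> Prop) gens g y :
  (forall x, sigma x <-> in_cone gens x) -> g \in gens ->
  dual_cone sigma y -> 0 <= pair g y.
Proof. by move=> hs hg; apply; apply/hs; apply: cone_gen. Qed.

Lemma near1 g y0 : 0 < pair g y0 -> exists e : R, 0 < e /\
  forall z, (forall i, `|z 0 i - y0 0 i| < e) -> 0 < pair g z.
Proof.
move=> hp; set A := \sum_i `|g 0 i|.
have A0 : 0 <= A by apply: sumr_ge0 => i _.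
have S0 : 0 < 1 + A by lra.
exists (pair g y0 / (1 + A)); split; first exact: divr_gt0.
move=> z hz; set e := pair g y0 / (1 + A).
have he : pair g y0 = e + A * e by rewrite -{1}(mul1r e) -mulrDl /e [RHS]mulrC divfK // gt_eqF.
have h1 : `|pair g (z - y0)| <= A * e.
  rewrite /A mulr_suml /pair; apply: le_trans (ler_norm_sum _ _ _) _.
  apply: ler_sum => i _; rewrite normrM mxE; apply: ler_wpM2l => //.
  by rewrite mxE; apply/ltW/hz.
have h2 : - `|pair g (z - y0)| <= pair g (z - y0) by rewrite lerNnormlW.
have e0 : 0 < e by apply: divr_gt0.
have -> : z = y0 + (z - y0) by rewrite addrC subrK.
rewrite pairD; lra.
Qed.

Lemma nearl (l : seq 'rV[R]_d) y0 : (forall g, g \in l -> 0 < pair g y0) ->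
  exists e : R, 0 < e /\ forall z, (forall i, `|z 0 i - y0 0 i| < e) ->
    forall g, g \in l -> 0 < pair g z.
Proof.
elim: l => [|g l IH] hl; first by exists 1; split=> // z _ g.
have [e1 [e10 h1]] := @near1 g y0 (hl g (mem_head _ _)).
have [e2 [e20 h2]] : exists e : R, 0 < e /\ forall z, (forall i, `|z 0 i - y0 0 i| < e) ->
    forall g, g \in l -> 0 < pair g z.
  by apply: IH => g' hg'; apply: hl; rewrite in_cons hg' orbT.
exists (Order.min e1 e2); split; first by rewrite lt_min e10 e20.
move=> z hz g'; rewrite in_cons => /orP [/eqP -> | hg'].
  by apply: h1 => i; have := hz i; rewrite lt_min => /andP [].
by apply: h2 => // i; have := hz i; rewrite lt_min => /andP [].
Qed.

Lemma psum_seq0 (t : seq 'rV[R]_d) (f : 'rV[R]_d -> R) :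
  (forall x, x \in t -> 0 <= f x) -> \sum_(x <- t) f x = 0 ->
  forall x, x \in t -> f x = 0.
Proof.
elim: t => [|a t IH] h hs x //; rewrite big_cons in hs.
have ha : 0 <= f a by apply: h; exact: mem_head.
have ht : forall x, x \in t -> 0 <= f x by move=> y hy; apply: h; rewrite in_cons hy orbT.
move: hs => /eqP; rewrite paddr_eq0 //; last by rewrite big_seq; apply: sumr_ge0 => i /ht.
case/andP=> /eqP fa /eqP st; rewrite in_cons => /orP [/eqP -> // | hx].
exact: IH.
Qed.

Lemma lattice_fix (gens : seq 'rV[R]_d) g n r y :
  (forall g, g \in gens -> lattice g /\ pair g n = 1) -> lattice n ->
  g \in gens -> pair g y = 0 -> lattice_r r n y -> lattice y.
Proof.
move=> hgs hn hg hy [k hw]; have [lg g1] := hgs g hg.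
set c := k%:~R / r in hw; set w := y - c *: n in hw.
have Hy : y = w + c *: n by rewrite /w subrK.
have hc : c = - pair g w.
  by move: hy; rewrite Hy pairD pairZ g1 mulr1 => /eqP; rewrite addrC addr_eq0 => /eqP.
have ci : c \is a Num.int by rewrite hc rpredN pair_int.
clearbody w; by move=> i; rewrite Hy !mxE; apply: rpredD; [exact: hw | apply: rpredM].
Qed.

Lemma pair_self_gt0 u : u != 0 -> 0 < pair u u.
Proof.
move=> hu; have [i hi] : exists i, u 0 i != 0.
  apply/existsP; apply: contraNT hu; rewrite negb_exists => /forallP h.
  by apply/eqP/rowP => i; rewrite mxE; move: (h i); rewrite negbK => /eqP.
rewrite /pair (bigD1 i) //=; apply: ltr_pwDl; first by rewrite -expr2 exprn_even_gt0.
by apply: sumr_ge0 => j _; rewrite -expr2 sqr_ge0.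
Qed.

Lemma small_eps u (e : R) : 0 < e -> exists eps : R, 0 < eps /\ forall i, `|eps * u 0 i| < e.
Proof.
move=> e0; set A := \sum_i `|u 0 i|.
have A0 : 0 <= A by apply: sumr_ge0 => i _.
have S0 : 0 < 1 + A by lra.
exists (e / (1 + A)); split; first exact: divr_gt0.
move=> i; set eps := e / (1 + A).
have he : e = eps + A * eps by rewrite -{1}(mul1r eps) -mulrDl /eps [RHS]mulrC divfK // gt_eqF.
have ep : 0 < eps by apply: divr_gt0.
have hi : `|u 0 i| <= A.
  rewrite /A (bigD1 i) //= lerDl; exact: sumr_ge0.
rewrite normrM (gtr0_norm ep).
have : eps * `|u 0 i| <= eps * A by apply: ler_wpM2l => //; exact: ltW.
rewrite [eps * A]mulrC; lra.
Qed.

Lemma interior_dual (sigma : 'rV[R]_d -> Prop) gens y :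
  (forall x, sigma x <-> in_cone gens x) ->
  (forall g, g \in gens -> 0 < pair g y) ->
  exists e : R, 0 < e /\ forall z, (forall i, `|z 0 i - y 0 i| < e) -> dual_cone sigma z.
Proof.
move=> hs hp; have [e [e0 he]] := @nearl gens y hp.
exists e; split=> // z hz; apply: (@dual_of_gens sigma gens z hs) => g hg.
exact/ltW/(he z hz).
Qed.

End Helpers.
Arguments interior_dual {R d sigma gens y}.
Arguments gen_dual {R d sigma gens g y}.
Arguments lattice_fix {R d gens g n r y}.
Arguments small_eps {R d} u {e}.
Arguments pair_self_gt0 {R d u}.
Arguments psum_seq0 {R d t f}.
Lemma zero_gen (R : archiRealFieldType) (d : nat) (sigma : 'rV[R]_d -> Prop) gens (y : 'rV[R]_d) :
  (forall x, sigma x <-> in_cone gens x) -> dual_cone sigma y ->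
  ~ (exists e : R, 0 < e /\ forall z : 'rV[R]_d, (forall i, `|z 0 i - y 0 i| < e) -> dual_cone sigma z) ->
  exists2 g, g \in gens & pair g y = 0.
Proof.
move=> hs hy hne; case: (boolP (has (fun g => pair g y == 0) gens)).
  by case/hasP=> g hg /eqP; exists g.
move/hasPn=> hp; exfalso; apply: hne; apply: (interior_dual hs) => g hg.
by rewrite lt_def (hp g hg) (gen_dual hs hg hy).
Qed.

Lemma lat_lat_r (R : archiRealFieldType) (d : nat) (r : R) (n y : 'rV[R]_d) :
  lattice y -> lattice_r r n y.
Proof. by move=> hy; exists 0; rewrite mulr0z mul0r scale0r subr0. Qed.

Arguments zero_gen {R d sigma gens y}.
Arguments lat_lat_r {R d} r n {y}.

Theorem proposition1p12 (R : archiRealFieldType) (d : nat)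
    (sigma : 'rV[R]_d -> Prop) (gens gens' : seq 'rV[R]_d) (n m : 'rV[R]_d) :
  gorenstein_cone sigma gens n ->
  gorenstein_cone (dual_cone sigma) gens' m ->
  let r := pair m n in
  (forall rho : 'rV[R]_d -> Prop, is_facet (dual_cone sigma) rho ->
     forall y : 'rV[R]_d,
       (lin rho y /\ lattice y) <-> (lin rho y /\ lattice_r r n y)) /\
  (forall y : 'rV[R]_d,
     (boundary (dual_cone sigma) y /\ lattice y) <->
     (boundary (dual_cone sigma) y /\ lattice_r r n y)).
Proof.
move=> [hs hg hn _] _ r; split; last first.
  move=> y; split=> -[hb hy]; split=> //; first exact: lat_lat_r.
  case: hb => hdy hne; have [g hgg hgy] := zero_gen hs hdy hne.
  exact: (lattice_fix hg hn hgg hgy hy).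
move=> rho [u [u0 hu hrho _]] y; split=> -[hl hy]; split=> //; first exact: lat_lat_r.
case: (hl) => s [hsr hys].
have rsum : forall t, (forall x, x \in t -> rho x) -> rho (\sum_(x <- t) x).
  elim=> [|a t IH] ht.
    by rewrite big_nil; apply/hrho; split; [move=> x _; rewrite pair0 | rewrite pair0].
  rewrite big_cons; have /hrho [da ua] := ht a (mem_head _ _).
  have /hrho [dt ut] : rho (\sum_(x <- t) x) by apply: IH => x hx; apply: ht; rewrite in_cons hx orbT.
  apply/hrho; split; last by rewrite pairD ua ut addr0.
  by move=> x hx; rewrite pairD; apply: addr_ge0; [exact: da | exact: dt].
set y0 := \sum_(x <- s) x.
have /hrho [dy0 uy0] : rho y0 by apply: rsum.
have [g hgg hgy0] : exists2 g, g \in gens & pair g y0 = 0.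
  apply: (zero_gen hs dy0) => -[e [e0 he]].
  have [eps [eps0 heps]] := small_eps u e0.
  have /he /hu : forall i, `|(y0 - eps *: u) 0 i - y0 0 i| < e.
    by move=> i; rewrite !mxE addrAC subrr add0r normrN.
  rewrite pairB pairZ uy0 sub0r oppr_ge0 => h.
  have := pair_self_gt0 u0; have := mulr_gt0 eps0 (pair_self_gt0 u0).
  move=> h1 _; move: h; rewrite leNgt h1 //.
have hx0 : forall x, x \in s -> pair g x = 0.
  apply: psum_seq0; last by rewrite -pair_sum.
  by move=> x /hsr /hrho [dx _]; apply: (gen_dual hs hgg dx).
have hgy : pair g y = 0.
  rewrite (coord_span (X := in_tuple s) hys) pair_sum big1 // => i _.
  by rewrite pairZ hx0 ?mulr0 // mem_nth.
exact: (lattice_fix hg hn hgg hgy hy).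
Qed.
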